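(* Let $\Bbbk$ be an algebraically closed field of characteristic $2$ and let $\mathfrak{u}(\mathfrak{m})$ be the algebra generated by $a,b,c$ with relations $ab+ba=c$, $ac+ca=a$, $bc+cb=b$, $a^4=b^4=0$, $c^2+c=0$. The elements $e_0=(1+ab+a^2b^2)(1+c)$ and $e_1=(1+a^2b^2)c$ are idempotents of $\mathfrak{u}(\mathfrak{m})$, and $P(V_0)\simeq\mathfrak{u}(\mathfrak{m})e_0$, $P(V_1)\simeq\mathfrak{u}(\mathfrak{m})e_1$ as left $\mathfrak{u}(\mathfrak{m})$-modules.
   Context: $P(V)$ denotes the projective cover of $V$. $V_0$ is the one-dimensional module with $a,b,c$ acting by $0$; $V_1$ is the three-dimensional module with basis $v_1,v_2,v_3$, $av_1=v_2$, $av_2=v_3$, $av_3=0$, $bv_1=0$, $bv_2=v_1$, $bv_3=v_2$, $cv_1=v_1$, $cv_2=0$, $cv_3=v_3$. *)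

(* Defs.v *)
From HB Require Import structures.
From mathcomp Require Import all_boot all_order all_algebra.
Set Implicit Arguments. Unset Strict Implicit. Unset Printing Implicit Defensive.
Import GRing.Theory.
Local Open Scope ring_scope.

Definition um_rels (R : pzRingType) (a b c : R) : Prop :=
  [/\ a * b + b * a = c, a * c + c * a = a, b * c + c * b = b,
      a ^+ 4 = 0 & b ^+ 4 = 0] /\ c ^+ 2 + c = 0.

Definition um_presented (k : fieldType) (A : algType k) (a b c : A) : Prop :=
  um_rels a b c /\
  forall (B : algType k) (a' b' c' : B), um_rels a' b' c' ->
    (exists f : {lrmorphism A -> B}, [/\ f a = a', f b = b' & f c = c']) /\
    (forall f g : {lrmorphism A -> B},
        f a = g a -> f b = g b -> f c = g c -> f =1 g).

Definition projective_mod (A : pzRingType) (P : lmodType A) : Prop :=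
  forall (M N : lmodType A) (f : {linear M -> N}) (g : {linear P -> N}),
    (forall y, exists x, f x = y) ->
    exists h : {linear P -> M}, forall p, f (h p) = g p.

Definition essential_epi (A : pzRingType) (P V : lmodType A)
    (pi : {linear P -> V}) : Prop :=
  (forall v, exists p, pi p = v) /\
  forall (M : lmodType A) (g : {linear M -> P}),
    (forall v, exists m, pi (g m) = v) -> forall p, exists m, g m = p.

Definition projective_cover (A : pzRingType) (P V : lmodType A) : Prop :=
  projective_mod P /\ exists pi : {linear P -> V}, essential_epi pi.

Definition iso_left_ideal (A : nzRingType) (P : lmodType A) (e : A) : Prop :=
  exists f : {linear P -> A^o}, injective f /\
    forall x : A, (exists p, f p = x) <-> (exists y : A, x = y * e).

(* V is the one-dimensional module V_0 (a, b, c act by 0);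
   the k-structure on an A-module is s *: v := s%:A *: v *)
Definition is_V0 (k : fieldType) (A : algType k) (a b c : A) (V : lmodType A)
  : Prop :=
  (exists v0 : V, v0 <> 0 /\ forall v : V, exists s : k, v = s%:A *: v0) /\
  (forall v : V, [/\ a *: v = 0, b *: v = 0 & c *: v = 0]).

Definition is_V1 (k : fieldType) (A : algType k) (a b c : A) (V : lmodType A)
  : Prop :=
  exists v1 v2 v3 : V,
    [/\ forall v : V, exists x y z : k,
          v = x%:A *: v1 + y%:A *: v2 + z%:A *: v3,
        forall x y z : k, x%:A *: v1 + y%:A *: v2 + z%:A *: v3 = 0 ->
          [/\ x = 0, y = 0 & z = 0],
        [/\ a *: v1 = v2, a *: v2 = v3 & a *: v3 = 0],
        [/\ b *: v1 = 0, b *: v2 = v1 & b *: v3 = v2] &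
        [/\ c *: v1 = v1, c *: v2 = 0 & c *: v3 = v3]].

(* Main.v *)
Require Import Defs.
From HB Require Import structures.
From mathcomp Require Import all_boot all_order all_algebra.
From Stdlib Require Import ClassicalEpsilon.
Set Implicit Arguments. Unset Strict Implicit. Unset Printing Implicit Defensive.
Import GRing.Theory.
Local Open Scope ring_scope.

Inductive term := Tg of nat | T0 | T1 | Tadd of term & term | Tmul of term & term
  | Texp of term & nat.

Definition pmul (p q : seq (seq nat)) := [seq u ++ v | u <- p, v <- q].
Fixpoint topoly t : seq (seq nat) :=
  match t with
  | Tg n => [:: [:: n]] | T0 => [::] | T1 => [:: [::]]
  | Tadd x y => topoly x ++ topoly y
  | Tmul x y => pmul (topoly x) (topoly y)
  | Texp x n => iter n (pmul (topoly x)) [:: [::]]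
  end.

Fixpoint rw (w : seq nat) : option (seq (seq nat)) :=
  match w with
  | x :: ((y :: t) as r) =>
    match x, y with
    | 1, 0 => Some [:: 0 :: 1 :: t; 2 :: t]
    | 2, 0 => Some [:: 0 :: 2 :: t; 0 :: t]
    | 2, 1 => Some [:: 1 :: 2 :: t; 1 :: t]
    | 2, 2 => Some [:: 2 :: t]
    | 0, 0 => if t is 0 :: 0 :: _ then Some [::] else omap (map (cons x)) (rw r)
    | 1, 1 => if t is 1 :: 1 :: _ then Some [::] else omap (map (cons x)) (rw r)
    | _, _ => omap (map (cons x)) (rw r)
    end
  | _ => None
  end.

Definition toggle (w : seq nat) (acc : seq (seq nat)) :=
  if w \in acc then rem w acc else w :: acc.
Definition canc (p : seq (seq nat)) := foldr toggle [::] p.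
Definition step (p : seq (seq nat)) :=
  canc (flatten [seq (if rw w is Some l then l else [:: w]) | w <- p]).
Fixpoint nrm (fuel : nat) (p : seq (seq nat)) :=
  match fuel with
  | 0 => p
  | S f => if has (fun w => isSome (rw w)) p then nrm f (step p) else p
  end.
Arguments nrm : simpl never.
Definition lmulw (w : seq nat) (q : seq (seq nat)) :=
  foldr (fun g r => nrm 64 (canc [seq g :: u | u <- r])) q w.
Definition mulN (p q : seq (seq nat)) := canc (flatten [seq lmulw w q | w <- p]).
Fixpoint topolyN t : seq (seq nat) :=
  match t with
  | Tg n => [:: [:: n]] | T0 => [::] | T1 => [:: [::]]
  | Tadd x y => canc (topolyN x ++ topolyN y)
  | Tmul x y => mulN (topolyN x) (topolyN y)
  | Texp x n => iter n (mulN (topolyN x)) [:: [::]]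
  end.
Definition check (t1 t2 : term) := perm_eq (topolyN t1) (topolyN t2).

Section Refl.
Variables (k : fieldType) (A : algType k) (a b c : A).
Hypothesis hab : a * b + b * a = c.
Hypothesis hac : a * c + c * a = a.
Hypothesis hbc : b * c + c * b = b.
Hypothesis ha4 : a ^+ 4 = 0.
Hypothesis hb4 : b ^+ 4 = 0.
Hypothesis hc2 : c ^+ 2 + c = 0.
Hypothesis two : forall x : A, x + x = 0.

Definition gen n := match n with 0 => a | 1 => b | _ => c end.
Fixpoint den t := match t with
  | Tg n => gen n | T0 => 0 | T1 => 1 | Tadd x y => den x + den y
  | Tmul x y => den x * den y | Texp x n => den x ^+ n end.
Definition evw (w : seq nat) := foldr (fun n r => gen n * r) 1 w.
Definition evp (p : seq (seq nat)) := \sum_(w <- p) evw w.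

Lemma oppE (x : A) : - x = x.
Proof. by symmetry; apply/eqP; rewrite -addr_eq0 two. Qed.
Lemma swapE (x y z : A) : x + y = z -> y = z + x.
Proof. by move=> <-; rewrite addrC addrA two add0r. Qed.

Lemma evp_cat p q : evp (p ++ q) = evp p + evp q.
Proof. by rewrite /evp big_cat. Qed.
Lemma evw_cat u v : evw (u ++ v) = evw u * evw v.
Proof. by elim: u => [|x u IH] /=; rewrite ?mul1r // IH mulrA. Qed.
Lemma evp_pmul p q : evp (pmul p q) = evp p * evp q.
Proof.
elim: p => [|u p IH]; first by rewrite /evp /pmul /= !big_nil mul0r.
rewrite /pmul /= evp_cat -/(pmul p q) IH /evp big_cons mulrDl; congr (_ + _).
by rewrite big_map mulr_sumr; apply: eq_bigr => v _; rewrite evw_cat.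
Qed.
Lemma evp_topoly t : evp (topoly t) = den t.
Proof.
elim: t => [n||| x IHx y IHy | x IHx y IHy | x IHx n] /=.
- by rewrite /evp big_seq1 /= mulr1; case: n => [|[|n]].
- by rewrite /evp big_nil.
- by rewrite /evp big_seq1.
- by rewrite evp_cat IHx IHy.
- by rewrite evp_pmul IHx IHy.
- elim: n => [|n IH]; first by rewrite /evp big_seq1 expr0.
  by rewrite iterS evp_pmul IH IHx exprS.
Qed.

Lemma evp_cons w p : evp (w :: p) = evw w + evp p.
Proof. by rewrite /evp big_cons. Qed.
Lemma evp_map_cons x l : evp (map (cons x) l) = gen x * evp l.
Proof.
elim: l => [|u l IH] /=; first by rewrite /evp !big_nil mulr0.
by rewrite !evp_cons IH mulrDr.
Qed.

Lemma ba_E : b * a = a * b + c.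
Proof. by rewrite (swapE hab) addrC. Qed.
Lemma ca_E : c * a = a * c + a.
Proof. by rewrite (swapE hac) addrC. Qed.
Lemma cb_E : c * b = b * c + b.
Proof. by rewrite (swapE hbc) addrC. Qed.
Lemma cc_E : c * c = c.
Proof. by rewrite -expr2 {2}(swapE hc2) add0r. Qed.

Lemma rw_sound w l : rw w = Some l -> evw w = evp l.
Proof.
elim: w l => [|x [|y t] IH] l //=.
have gen_ok : forall l', omap (map (cons x)) (rw (y :: t)) = Some l' -> 
   gen x * (gen y * evw t) = evp l'.
  move=> l'; case E: (rw (y :: t)) => [l0|] //= [<-].
  by rewrite evp_map_cons -(IH _ E).
have r2 : forall u v r s : A, u * v = r + s -> u * (v * evw t) = r * evw t + s * evw t.
  by move=> u v r s H; rewrite mulrA H mulrDl.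
have r4 : forall u s : A, u ^+ 4 = 0 -> u * (u * (u * (u * s)))= 0.
  by move=> u s H; rewrite !mulrA -!expr2 -exprSr -exprSr H mul0r.
clear IH.
case: x y gen_ok r2 r4 => [|[|[|x]]] [|[|[|y]]] gen_ok r2 r4 //= H;
  try (by apply: gen_ok);
  try (by case: H => <-; rewrite !evp_cons /evp big_nil addr0 /= ?mulrA 
        ?ba_E ?ca_E ?cb_E ?cc_E ?mulrDl -?mulrA).
- move: H; case: t gen_ok r2 r4 => [|[|[|z]] [|[|[|u]] t']] gen_ok r2 r4 //= H;
  try (by apply: gen_ok);
  by case: H => <-; rewrite /evp big_nil /=; apply: r4.
- move: H; case: t gen_ok r2 r4 => [|[|[|z]] [|[|[|u]] t']] gen_ok r2 r4 //= H;
  try (by apply: gen_ok);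
  by case: H => <-; rewrite /evp big_nil /=; apply: r4.
Qed.

Lemma evp_perm p q : perm_eq p q -> evp p = evp q.
Proof. exact: perm_big. Qed.

Lemma evp_toggle w acc : evp (toggle w acc) = evw w + evp acc.
Proof.
rewrite /toggle; case: ifP => // wi; last by rewrite evp_cons.
by rewrite (evp_perm (perm_to_rem wi)) evp_cons addrA two add0r.
Qed.
Lemma evp_canc p : evp (canc p) = evp p.
Proof.
elim: p => [|w p IH] //=; by rewrite evp_toggle IH evp_cons.
Qed.
Lemma evp_step p : evp (step p) = evp p.
Proof.
rewrite /step evp_canc; elim: p => [|w p IH] //=.
rewrite evp_cat IH evp_cons; congr (_ + _).
case E: (rw w) => [l|]; first by rewrite -(rw_sound E).
by rewrite evp_cons /evp big_nil addr0.
Qed.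
Lemma evp_nrm n p : evp (nrm n p) = evp p.
Proof.
elim: n p => [//|n IH] p.
change (nrm n.+1 p) with (if has (fun w => isSome (rw w)) p then nrm n (step p) else p).
by case: ifP => // _; rewrite IH evp_step.
Qed.
Lemma evp_lmulw w q : evp (lmulw w q) = evw w * evp q.
Proof.
elim: w => [|g w IH] /=; first by rewrite mul1r.
by rewrite evp_nrm evp_canc evp_map_cons IH mulrA.
Qed.
Lemma evp_mulN p q : evp (mulN p q) = evp p * evp q.
Proof.
rewrite /mulN evp_canc; elim: p => [|w p IH] /=; first by rewrite /evp !big_nil mul0r.
by rewrite evp_cat IH evp_lmulw evp_cons mulrDl.
Qed.
Lemma evp_topolyN t : evp (topolyN t) = den t.
Proof.
elim: t => [n||| x IHx y IHy | x IHx y IHy | x IHx n] /=.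
- by rewrite /evp big_seq1 /= mulr1; case: n => [|[|n]].
- by rewrite /evp big_nil.
- by rewrite /evp big_seq1.
- by rewrite evp_canc evp_cat IHx IHy.
- by rewrite evp_mulN IHx IHy.
- elim: n => [|n IH]; first by rewrite /evp big_seq1 expr0.
  by rewrite iterS evp_mulN IH IHx exprS.
Qed.

Lemma reflect_ok t1 t2 : check t1 t2 -> den t1 = den t2.
Proof. by move=> /evp_perm; rewrite !evp_topolyN. Qed.
End Refl.

Ltac reify a b c t :=
  lazymatch t with
  | GRing.add ?x ?y => let p := reify a b c x in let q := reify a b c y in constr:(Tadd p q)
  | GRing.mul ?x ?y => let p := reify a b c x in let q := reify a b c y in constr:(Tmul p q)
  | GRing.exp ?x ?n => let p := reify a b c x in constr:(Texp p n)
  | GRing.one _ => constr:(T1)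
  | @Algebra.zero _ => constr:(T0)
  | a => constr:(Tg 0)
  | b => constr:(Tg 1)
  | c => constr:(Tg 2)
  end.

Ltac ncrunch a b c hab hac hbc ha4 hb4 hc2 two :=
  lazymatch goal with
  | |- ?L = ?R =>
    let t1 := reify a b c L in let t2 := reify a b c R in
    apply: (@reflect_ok _ _ a b c hab hac hbc ha4 hb4 hc2 two t1 t2); vm_compute; reflexivity
  end.

Section Univ.
Variables (k : fieldType) (A : algType k) (Q : A -> Prop).
Hypothesis Q1 : Q 1.
Hypothesis Q0 : Q 0.
Hypothesis QD : forall x y, Q x -> Q y -> Q (x + y).
Hypothesis QZ : forall (s : k) x, Q x -> Q (s *: x).
Hypothesis QM : forall x y, Q x -> Q y -> Q (x * y).

Definition qb (x : A) : bool := if excluded_middle_informative (Q x) then true else false.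
Lemma qbP x : reflect (Q x) (qb x).
Proof. by rewrite /qb; case: excluded_middle_informative => h; constructor. Qed.
Definition qpred : {pred A} := qb.

Lemma qpred_closed : GRing.subsemialg_closed qpred.
Proof.
split.
- by rewrite unfold_in; apply/qbP.
- split; first by rewrite unfold_in; apply/qbP.
  by move=> x y; rewrite !unfold_in => /qbP hx /qbP hy; apply/qbP; apply: QD.
- by move=> s x; rewrite !unfold_in => /qbP hx; apply/qbP; apply: QZ.
- by move=> x y; rewrite !unfold_in => /qbP hx /qbP hy; apply/qbP; apply: QM.
Qed.

HB.instance Definition _ := GRing.isSubalgClosed.Build k A qpred qpred_closed.
Record Sb := MkSb { sbval :> A; _ : sbval \in qpred }.
HB.instance Definition _ := [isSub for sbval].
HB.instance Definition _ := [Choice of Sb by <:].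
HB.instance Definition _ := [SubChoice_isSubAlgebra of Sb by <:].

Definition sbv (x : Sb) : A := sbval x.
Lemma sbv_lin : linear sbv. Proof. by []. Qed.
Lemma sbv_mm : GRing.monoid_morphism sbv. Proof. by []. Qed.
HB.instance Definition _ := GRing.isLinear.Build k Sb A _ sbv sbv_lin.
HB.instance Definition _ := GRing.isMonoidMorphism.Build Sb A sbv sbv_mm.

Lemma univ_all (a b c : A) : um_presented a b c -> Q a -> Q b -> Q c -> forall z, Q z.
Proof.
move=> [rels U] Qa Qb Qc z.
have ia : a \in qpred by rewrite unfold_in; apply/qbP.
have ib : b \in qpred by rewrite unfold_in; apply/qbP.
have ic : c \in qpred by rewrite unfold_in; apply/qbP.
pose a' := MkSb ia; pose b' := MkSb ib; pose c' := MkSb ic.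
have rels' : um_rels a' b' c'.
  case: rels => [[h1 h2 h3 h4 h5] h6]; split; [split|];
  by apply: val_inj; rewrite /= ?rmorphD ?rmorphM ?rmorphXn ?rmorph0 /=.
have [[f [fa fb fc]] _] := U Sb a' b' c' rels'.
have [_ uniq] := U A a b c rels.
pose g : {lrmorphism A -> A} := (sbv \o f).
have E : idfun z = g z by apply: uniq; rewrite /g /= ?fa ?fb ?fc.
rewrite [z]E /g /=; case: (f z) => x /= /qbP; done.
Qed.
End Univ.
Section Cover.
Variables (k : fieldType) (A : algType k) (e : A).

Definition idlp : {pred A^o} := fun x : A^o => x * e == x.

Lemma idlp_submod : submod_closed idlp.
Proof.
split; first by rewrite /idlp unfold_in /= mul0r.
move=> z u v; rewrite /idlp !unfold_in /= => /eqP hu /eqP hv.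
by rewrite mulrDl -mulrA hu hv.
Qed.

HB.instance Definition _ := GRing.isSubmodClosed.Build A A^o idlp idlp_submod.

Record Pe := MkPe { pval :> A^o; _ : pval \in idlp }.
HB.instance Definition _ := [isSub for pval].
HB.instance Definition _ := [Choice of Pe by <:].
HB.instance Definition _ := [SubChoice_isSubLmodule of Pe by <:].

Lemma pvalZ (z : A) (p : Pe) : pval (z *: p) = z * pval p.
Proof. by []. Qed.
Lemma pvalD (p q : Pe) : pval (p + q) = pval p + pval q.
Proof. by []. Qed.
Lemma pvalE (p : Pe) : pval p * e = pval p.
Proof. by case: p => x /= /eqP. Qed.

Lemma pval_lin : linear (pval : Pe -> A^o).
Proof. by move=> z p q. Qed.
HB.instance Definition _ := GRing.isLinear.Build A Pe A^o _ pval pval_lin.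

Definition rmulP (M : lmodType A) (x0 : M) (p : Pe) : M := pval p *: x0.
Lemma rmulP_lin (M : lmodType A) (x0 : M) : linear (rmulP x0).
Proof. by move=> z p q; rewrite /rmulP pvalD pvalZ scalerDl scalerA. Qed.
HB.instance Definition _ (M : lmodType A) (x0 : M) :=
  GRing.isLinear.Build A Pe M _ (rmulP x0) (rmulP_lin x0).

Hypothesis ee : e * e = e.

Definition eP : Pe := MkPe (introT eqP ee : (e : A^o) \in idlp).

Lemma mulP_eP (p : Pe) : pval p *: eP = p.
Proof. apply: val_inj. rewrite [LHS]pvalZ. exact: pvalE. Qed.

Lemma cover_gen (V : lmodType A) (vg : V) :
  (forall v : V, exists z : A, (z * e) *: vg = v) ->
  (forall x : A, x * e = x -> x *: vg = vg -> exists y, y * x = e) ->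
  exists P : lmodType A, projective_cover P V /\ iso_left_ideal P e.
Proof.
move=> surj key; exists Pe; split; last first.
  exists pval; split; first exact: val_inj.
  move=> x; split.
    by case=> p <-; exists (pval p); rewrite pvalE.
  case=> y ->.
  have h : (y * e : A^o) \in idlp by rewrite /idlp unfold_in /= -mulrA ee.
  by exists (MkPe h).
split.
  move=> M N f g fsurj.
  have [x0 hx0] := fsurj (g eP).
  exists (rmulP x0) => p.
  by rewrite /rmulP linearZ hx0 -linearZ mulP_eP.
exists (rmulP vg); split.
  move=> v; have [z <-] := surj v.
  have h : (z * e : A^o) \in idlp by rewrite /idlp unfold_in /= -mulrA ee.
  by exists (MkPe h).
move=> M g gsurj p.
have [m hm] := gsurj vg.
have [y hy] := key (pval (g m)) (pvalE _) hm.
exists ((pval p * y) *: m).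
apply: val_inj; rewrite linearZ; rewrite [val _]pvalZ -mulrA hy.
exact: pvalE.
Qed.
End Cover.

Section Span.
Variables (k : fieldType) (A : algType k).

Inductive span (S : seq A) : A -> Prop :=
| sp0 : span S 0
| spA (al : k) s w : List.In s S -> span S w -> span S (al *: s + w).

Lemma span_mem S s : List.In s S -> span S s.
Proof. by move=> h; rewrite -[s]addr0 -[s]scale1r; apply: spA => //; apply: sp0. Qed.
Lemma span_add S u v : span S u -> span S v -> span S (u + v).
Proof.
elim=> [|al s w hs hw IH] hv; first by rewrite add0r.
by rewrite -addrA; apply: spA => //; apply: IH.
Qed.
Lemma span_scale S (al : k) u : span S u -> span S (al *: u).
Proof.
elim=> [|be s w hs hw IH]; first by rewrite scaler0; apply: sp0.
by rewrite scalerDr scalerA; apply: spA.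
Qed.
Lemma span_map S T (g : A) : (forall s, List.In s S -> span T (g * s)) ->
  forall w, span S w -> span T (g * w).
Proof.
move=> hg w; elim=> [|al s w' hs hw IH]; first by rewrite mulr0; apply: sp0.
by rewrite mulrDr -scalerAr; apply: span_add => //; apply: span_scale; apply: hg.
Qed.
Lemma span2 (e n w : A) : span [:: e; n] w -> exists al be : k, w = al *: e + be *: n.
Proof.
elim=> [|al s w' /= hs hw [x [y ->]]]; first by exists 0, 0; rewrite !scale0r addr0.
case: hs => [<-|[<-|[]]].
  by exists (al + x), y; rewrite scalerDl addrA.
by exists x, (al + y); rewrite scalerDl addrCA addrA.
Qed.

Lemma scaleAE (V : lmodType A) (al : k) (u : A) (v : V) :
  (al *: u) *: v = al%:A *: (u *: v).
Proof. by rewrite scalerA -scalerAl mul1r. Qed.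

Lemma alpha1 (V : lmodType A) (v : V) (al : k) : v <> 0 -> al%:A *: v = v -> al = 1.
Proof.
move=> nz h; apply/eqP; apply: contraT => ne.
have h0 : (al - 1)%:A *: v = 0 by rewrite scalerBl scale1r scalerBl h scale1r subrr.
have nz' : al - 1 != 0 by rewrite subr_eq0.
suff : v = 0 by move/nz.
rewrite -[v]scale1r -[1 : A]scale1r -(mulVf nz') -scalerA scaleAE.
by rewrite h0 scaler0.
Qed.

Lemma key_gen (e n : A) (V : lmodType A) (vg : V) (S : seq A) :
  e * e = e -> e * n = n -> n * e = n -> n * n = 0 ->
  (forall z w, span S w -> span S (z * w)) -> span S e ->
  (forall s, List.In s S -> span [:: e; n] (e * s)) ->
  e *: vg = vg -> n *: vg = 0 -> vg <> 0 ->
  forall x, x * e = x -> x *: vg = vg -> exists y, y * x = e.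
Proof.
move=> ee en ne nn Q Se Sp evg nvg vnz x xe xvg.
have : span [:: e; n] (e * (x * e)) by apply: (span_map Sp); apply: Q.
move=> /span2 [al [be E]].
rewrite xe in E.
have h1 : (e * x) *: vg = vg.
  rewrite -(scalerA e x vg). 
  by rewrite xvg evg.
have al1 : al = 1.
  apply: (alpha1 vnz).
  move: h1; rewrite E (@scalerDl _ V).
  rewrite (scaleAE al e vg) (scaleAE be n vg) nvg scaler0 addr0 evg; done.
rewrite al1 scale1r in E.
exists (e - be *: n).
have -> : (e - be *: n) * x = (e - be *: n) * (e * x).
  by rewrite [RHS]mulrA [_ * e]mulrBl -scalerAl ee ne.
rewrite E mulrBl !mulrDr -!scalerAl -!scalerAr ee en ne nn !scaler0 addr0.
by rewrite addrK.
Qed.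
End Span.

Lemma span_eqr (k : fieldType) (A : algType k) (S : seq A) (x y : A) : x = y -> span S x -> span S y.
Proof. by move=> ->. Qed.
Ltac span_tac := repeat first [ apply: sp0 | apply: span_add | (apply: span_mem; rewrite /=; tauto) ].

Section Main.
Variables (k : fieldType) (A : algType k) (a b c : A).
Hypothesis hab : a * b + b * a = c.
Hypothesis hac : a * c + c * a = a.
Hypothesis hbc : b * c + c * b = b.
Hypothesis ha4 : a ^+ 4 = 0.
Hypothesis hb4 : b ^+ 4 = 0.
Hypothesis hc2 : c ^+ 2 + c = 0.
Hypothesis two : forall x : A, x + x = 0.
Ltac crunch := ncrunch a b c hab hac hbc ha4 hb4 hc2 two.

Definition E0 := (1 + a * b + a ^+ 2 * b ^+ 2) * (1 + c).
Definition E1 := (1 + a ^+ 2 * b ^+ 2) * c.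
Definition N0 := E0 * a * b * E0.
Definition N1 := E1 * a * b * E1.

Lemma E0E0 : E0 * E0 = E0. Proof. rewrite /E0; crunch. Qed.
Lemma E1E1 : E1 * E1 = E1. Proof. rewrite /E1; crunch. Qed.
Lemma E0N0 : E0 * N0 = N0. Proof. rewrite /N0 /E0; crunch. Qed.
Lemma E1N1 : E1 * N1 = N1. Proof. rewrite /N1 /E1; crunch. Qed.
Lemma N0E0 : N0 * E0 = N0. Proof. rewrite /N0 /E0; crunch. Qed.
Lemma N1E1 : N1 * E1 = N1. Proof. rewrite /N1 /E1; crunch. Qed.
Lemma N0N0 : N0 * N0 = 0. Proof. rewrite /N0 /E0; crunch. Qed.
Lemma N1N1 : N1 * N1 = 0. Proof. rewrite /N1 /E1; crunch. Qed.

Definition S0 := [:: E0; b * E0; a * E0; b ^+ 2 * E0; a * b * E0; a ^+ 2 * E0; b ^+ 3 * E0; a ^+ 3 * E0].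
Lemma S0_a s : List.In s S0 -> span S0 (a * s).
Proof.
move=> /= [<-|[<-|[<-|[<-|[<-|[<-|[<-|[<-|[]]]]]]]]].
- apply: (@span_eqr _ _ _ ((a * E0))); first by rewrite /E0; crunch.
  by span_tac.
- apply: (@span_eqr _ _ _ ((a * b * E0))); first by rewrite /E0; crunch.
  by span_tac.
- apply: (@span_eqr _ _ _ ((a ^+ 2 * E0))); first by rewrite /E0; crunch.
  by span_tac.
- apply: (@span_eqr _ _ _ ((b * E0))); first by rewrite /E0; crunch.
  by span_tac.
- apply: (@span_eqr _ _ _ (0)); first by rewrite /E0; crunch.
  by span_tac.
- apply: (@span_eqr _ _ _ ((a ^+ 3 * E0))); first by rewrite /E0; crunch.
  by span_tac.
- apply: (@span_eqr _ _ _ ((b ^+ 2 * E0))); first by rewrite /E0; crunch.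
  by span_tac.
- apply: (@span_eqr _ _ _ (0)); first by rewrite /E0; crunch.
  by span_tac.
Qed.
Lemma S0_b s : List.In s S0 -> span S0 (b * s).
Proof.
move=> /= [<-|[<-|[<-|[<-|[<-|[<-|[<-|[<-|[]]]]]]]]].
- apply: (@span_eqr _ _ _ ((b * E0))); first by rewrite /E0; crunch.
  by span_tac.
- apply: (@span_eqr _ _ _ ((b ^+ 2 * E0))); first by rewrite /E0; crunch.
  by span_tac.
- apply: (@span_eqr _ _ _ ((a * b * E0))); first by rewrite /E0; crunch.
  by span_tac.
- apply: (@span_eqr _ _ _ ((b ^+ 3 * E0))); first by rewrite /E0; crunch.
  by span_tac.
- apply: (@span_eqr _ _ _ (0)); first by rewrite /E0; crunch.
  by span_tac.
- apply: (@span_eqr _ _ _ ((a * E0))); first by rewrite /E0; crunch.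
  by span_tac.
- apply: (@span_eqr _ _ _ (0)); first by rewrite /E0; crunch.
  by span_tac.
- apply: (@span_eqr _ _ _ ((a ^+ 2 * E0))); first by rewrite /E0; crunch.
  by span_tac.
Qed.
Lemma S0_c s : List.In s S0 -> span S0 (c * s).
Proof.
move=> /= [<-|[<-|[<-|[<-|[<-|[<-|[<-|[<-|[]]]]]]]]].
- apply: (@span_eqr _ _ _ (0)); first by rewrite /E0; crunch.
  by span_tac.
- apply: (@span_eqr _ _ _ ((b * E0))); first by rewrite /E0; crunch.
  by span_tac.
- apply: (@span_eqr _ _ _ ((a * E0))); first by rewrite /E0; crunch.
  by span_tac.
- apply: (@span_eqr _ _ _ (0)); first by rewrite /E0; crunch.
  by span_tac.
- apply: (@span_eqr _ _ _ (0)); first by rewrite /E0; crunch.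
  by span_tac.
- apply: (@span_eqr _ _ _ (0)); first by rewrite /E0; crunch.
  by span_tac.
- apply: (@span_eqr _ _ _ ((b ^+ 3 * E0))); first by rewrite /E0; crunch.
  by span_tac.
- apply: (@span_eqr _ _ _ ((a ^+ 3 * E0))); first by rewrite /E0; crunch.
  by span_tac.
Qed.
Lemma S0_e s : List.In s S0 -> span [:: E0; N0] (E0 * s).
Proof.
move=> /= [<-|[<-|[<-|[<-|[<-|[<-|[<-|[<-|[]]]]]]]]].
- apply: (@span_eqr _ _ _ (E0)); first by rewrite /N0 /E0; crunch.
  by span_tac.
- apply: (@span_eqr _ _ _ (0)); first by rewrite /N0 /E0; crunch.
  by span_tac.
- apply: (@span_eqr _ _ _ (0)); first by rewrite /N0 /E0; crunch.
  by span_tac.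
- apply: (@span_eqr _ _ _ (0)); first by rewrite /N0 /E0; crunch.
  by span_tac.
- apply: (@span_eqr _ _ _ (N0)); first by rewrite /N0 /E0; crunch.
  by span_tac.
- apply: (@span_eqr _ _ _ (0)); first by rewrite /N0 /E0; crunch.
  by span_tac.
- apply: (@span_eqr _ _ _ (0)); first by rewrite /N0 /E0; crunch.
  by span_tac.
- apply: (@span_eqr _ _ _ (0)); first by rewrite /N0 /E0; crunch.
  by span_tac.
Qed.
Definition S1 := [:: E1; b * E1; a * E1; a * b * E1; a ^+ 2 * E1; a ^+ 2 * b * E1; a ^+ 3 * E1; a ^+ 3 * b * E1].
Lemma S1_a s : List.In s S1 -> span S1 (a * s).
Proof.
move=> /= [<-|[<-|[<-|[<-|[<-|[<-|[<-|[<-|[]]]]]]]]].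
- apply: (@span_eqr _ _ _ ((a * E1))); first by rewrite /E1; crunch.
  by span_tac.
- apply: (@span_eqr _ _ _ ((a * b * E1))); first by rewrite /E1; crunch.
  by span_tac.
- apply: (@span_eqr _ _ _ ((a ^+ 2 * E1))); first by rewrite /E1; crunch.
  by span_tac.
- apply: (@span_eqr _ _ _ ((a ^+ 2 * b * E1))); first by rewrite /E1; crunch.
  by span_tac.
- apply: (@span_eqr _ _ _ ((a ^+ 3 * E1))); first by rewrite /E1; crunch.
  by span_tac.
- apply: (@span_eqr _ _ _ ((a ^+ 3 * b * E1))); first by rewrite /E1; crunch.
  by span_tac.
- apply: (@span_eqr _ _ _ (0)); first by rewrite /E1; crunch.
  by span_tac.
- apply: (@span_eqr _ _ _ (0)); first by rewrite /E1; crunch.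
  by span_tac.
Qed.
Lemma S1_b s : List.In s S1 -> span S1 (b * s).
Proof.
move=> /= [<-|[<-|[<-|[<-|[<-|[<-|[<-|[<-|[]]]]]]]]].
- apply: (@span_eqr _ _ _ ((b * E1))); first by rewrite /E1; crunch.
  by span_tac.
- apply: (@span_eqr _ _ _ (0)); first by rewrite /E1; crunch.
  by span_tac.
- apply: (@span_eqr _ _ _ ((E1) + (a * b * E1))); first by rewrite /E1; crunch.
  by span_tac.
- apply: (@span_eqr _ _ _ (0)); first by rewrite /E1; crunch.
  by span_tac.
- apply: (@span_eqr _ _ _ ((a * E1) + (a ^+ 2 * b * E1))); first by rewrite /E1; crunch.
  by span_tac.
- apply: (@span_eqr _ _ _ ((a * b * E1))); first by rewrite /E1; crunch.
  by span_tac.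
- apply: (@span_eqr _ _ _ ((a ^+ 3 * b * E1))); first by rewrite /E1; crunch.
  by span_tac.
- apply: (@span_eqr _ _ _ ((a ^+ 2 * b * E1))); first by rewrite /E1; crunch.
  by span_tac.
Qed.
Lemma S1_c s : List.In s S1 -> span S1 (c * s).
Proof.
move=> /= [<-|[<-|[<-|[<-|[<-|[<-|[<-|[<-|[]]]]]]]]].
- apply: (@span_eqr _ _ _ ((E1))); first by rewrite /E1; crunch.
  by span_tac.
- apply: (@span_eqr _ _ _ (0)); first by rewrite /E1; crunch.
  by span_tac.
- apply: (@span_eqr _ _ _ (0)); first by rewrite /E1; crunch.
  by span_tac.
- apply: (@span_eqr _ _ _ ((a * b * E1))); first by rewrite /E1; crunch.
  by span_tac.
- apply: (@span_eqr _ _ _ ((a ^+ 2 * E1))); first by rewrite /E1; crunch.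
  by span_tac.
- apply: (@span_eqr _ _ _ (0)); first by rewrite /E1; crunch.
  by span_tac.
- apply: (@span_eqr _ _ _ (0)); first by rewrite /E1; crunch.
  by span_tac.
- apply: (@span_eqr _ _ _ ((a ^+ 3 * b * E1))); first by rewrite /E1; crunch.
  by span_tac.
Qed.
Lemma S1_e s : List.In s S1 -> span [:: E1; N1] (E1 * s).
Proof.
move=> /= [<-|[<-|[<-|[<-|[<-|[<-|[<-|[<-|[]]]]]]]]].
- apply: (@span_eqr _ _ _ (E1)); first by rewrite /N1 /E1; crunch.
  by span_tac.
- apply: (@span_eqr _ _ _ (0)); first by rewrite /N1 /E1; crunch.
  by span_tac.
- apply: (@span_eqr _ _ _ (0)); first by rewrite /N1 /E1; crunch.
  by span_tac.
- apply: (@span_eqr _ _ _ (N1)); first by rewrite /N1 /E1; crunch.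
  by span_tac.
- apply: (@span_eqr _ _ _ (0)); first by rewrite /N1 /E1; crunch.
  by span_tac.
- apply: (@span_eqr _ _ _ (0)); first by rewrite /N1 /E1; crunch.
  by span_tac.
- apply: (@span_eqr _ _ _ (0)); first by rewrite /N1 /E1; crunch.
  by span_tac.
- apply: (@span_eqr _ _ _ (0)); first by rewrite /N1 /E1; crunch.
  by span_tac.
Qed.

Section Act.
Variables (V : lmodType A).
Lemma actM (x y : A) (v : V) : (x * y) *: v = x *: (y *: v).
Proof. exact: (esym (scalerA x y v)). Qed.
Lemma actD (x y : A) (v : V) : (x + y) *: v = x *: v + y *: v.
Proof. exact: scalerDl. Qed.
Lemma act1 (v : V) : (1 : A) *: v = v.
Proof. exact: (scale1r v). Qed.
Lemma act0 (x : A) : x *: (0 : V) = 0.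
Proof. exact: (scaler0 _ x). Qed.
Lemma actX2 (x : A) (v : V) : (x ^+ 2) *: v = x *: (x *: v).
Proof. by rewrite expr2 actM. Qed.
End Act.

Lemma QS (hp : um_presented a b c) (S : seq A) : (forall s, List.In s S -> span S (a * s)) ->
  (forall s, List.In s S -> span S (b * s)) ->
  (forall s, List.In s S -> span S (c * s)) ->
  forall z w, span S w -> span S (z * w).
Proof.
move=> Sa Sb Sc z.
apply: (@univ_all k A (fun z => forall w, span S w -> span S (z * w))) hp _ _ _ z.
- by move=> w; rewrite mul1r.
- by move=> w _; rewrite mul0r; apply: sp0.
- by move=> x y hx hy w hw; rewrite mulrDl; apply: span_add; [apply: hx | apply: hy].
- by move=> s x hx w hw; rewrite -scalerAl; apply: span_scale; apply: hx.
- by move=> x y hx hy w hw; rewrite -mulrA; apply: hx; apply: hy.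
- exact: span_map.
- exact: span_map.
- exact: span_map.
Qed.

Lemma V0_facts (V : lmodType A) : is_V0 a b c V -> exists v0 : V,
  [/\ E0 *: v0 = v0, N0 *: v0 = 0, v0 <> 0 & forall v, exists z, (z * E0) *: v0 = v].
Proof.
case=> [[v0 [nz sp]] kill]; exists v0.
have ka (v : V) : a *: v = 0 by case: (kill v).
have kb (v : V) : b *: v = 0 by case: (kill v).
have kc (v : V) : c *: v = 0 by case: (kill v).
have e0v : E0 *: v0 = v0.
  have h1c : (1 + c) *: v0 = v0 by rewrite actD act1 kc addr0.
  by rewrite /E0 actM h1c !actD act1 !actM !kb !act0 !addr0.
split => //.
- by rewrite /N0 actM e0v actM kb act0.
- move=> v; have [s ->] := sp v; exists (s%:A); by rewrite actM e0v.
Qed.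

Lemma V1_facts (V : lmodType A) : is_V1 a b c V -> exists v1 : V,
  [/\ E1 *: v1 = v1, N1 *: v1 = 0, v1 <> 0 & forall v, exists z, (z * E1) *: v1 = v].
Proof.
case=> v1 [v2 [v3 [sp ind [a1 a2 a3] [b1 b2 b3] [c1 c2 c3]]]]; exists v1.
have e1v : E1 *: v1 = v1.
  by rewrite /E1 actM c1 actD act1 actM [b ^+ 2 *: _]actX2 b1 act0 act0 addr0.
split => //.
- by rewrite /N1 actM e1v actM b1 act0.
- move=> h; have := ind 1 0 0; rewrite h !scale0r act0 !addr0 => /(_ erefl) [h1 _ _].
  by move: (oner_neq0 k); rewrite h1 eqxx.
- move=> v; have [x [y [z ->]]] := sp v.
  exists (x%:A + y%:A * a + z%:A * (a * a)).
  by rewrite actM e1v !actD !actM a1 a2.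
Qed.
End Main.

Unset Implicit Arguments.
Theorem lemma3p15 (k : closedFieldType) (A : algType k) (a b c : A) :
  (2%N \in [pchar k]) -> um_presented a b c ->
  let e0 := (1 + a * b + a ^+ 2 * b ^+ 2) * (1 + c) in
  let e1 := (1 + a ^+ 2 * b ^+ 2) * c in
  [/\ e0 * e0 = e0, e1 * e1 = e1,
      forall V : lmodType A, is_V0 a b c V ->
        exists P : lmodType A, projective_cover P V /\ iso_left_ideal P e0 &
      forall V : lmodType A, is_V1 a b c V ->
        exists P : lmodType A, projective_cover P V /\ iso_left_ideal P e1].
Proof.
move=> h2 hp e0 e1.
have two : forall x : A, x + x = 0.
  by move=> x; rewrite -mulr2n -scaler_nat (pcharf0 h2) scale0r.
have [[[hab hac hbc ha4 hb4] hc2] _] := hp.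
have E0E := E0E0 hab hac hbc ha4 hb4 hc2 two.
have E1E := E1E1 hab hac hbc ha4 hb4 hc2 two.
split.
- exact: E0E.
- exact: E1E.
- move=> V hV; have [v0 [ev nv nz sj]] := V0_facts hV.
  apply: (@cover_gen _ _ _ E0E V v0 sj).
  apply: (key_gen E0E (E0N0 hab hac hbc ha4 hb4 hc2 two) (N0E0 hab hac hbc ha4 hb4 hc2 two)
     (N0N0 hab hac hbc ha4 hb4 hc2 two) _ _ (S0_e hab hac hbc ha4 hb4 hc2 two) ev nv nz).
  + exact: (QS hp (S0_a hab hac hbc ha4 hb4 hc2 two) (S0_b hab hac hbc ha4 hb4 hc2 two)
      (S0_c hab hac hbc ha4 hb4 hc2 two)).
  + by apply: span_mem; left.
- move=> V hV; have [v0 [ev nv nz sj]] := V1_facts hV.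
  apply: (@cover_gen _ _ _ E1E V v0 sj).
  apply: (key_gen E1E (E1N1 hab hac hbc ha4 hb4 hc2 two) (N1E1 hab hac hbc ha4 hb4 hc2 two)
     (N1N1 hab hac hbc ha4 hb4 hc2 two) _ _ (S1_e hab hac hbc ha4 hb4 hc2 two) ev nv nz).
  + exact: (QS hp (S1_a hab hac hbc ha4 hb4 hc2 two) (S1_b hab hac hbc ha4 hb4 hc2 two)
      (S1_c hab hac hbc ha4 hb4 hc2 two)).
  + by apply: span_mem; left.
Qed.
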